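(* Let $S$ be a finite inverse monoid with underlying groupoid $G$, and let $\beta\colon S\to\mathsf{K}(G)$ be the map $\beta(a)=a^{\downarrow}=\{x\in S: x\le a\}$. Let $\alpha\colon S\to T$ be any monoid homomorphism to a Boolean inverse monoid $T$. Then there is a unique morphism of Boolean inverse monoids $\gamma\colon \mathsf{K}(G)\to T$ such that $\gamma\beta=\alpha$.
   Context: An inverse semigroup is a semigroup in which each $s$ has a unique $s^{-1}$ with $s=ss^{-1}s$, $s^{-1}=s^{-1}ss^{-1}$; natural partial order $s\le t$ iff $s=ts^{-1}s$. The underlying groupoid $G$ of $S$ is $S$ with the restricted product $s\cdot t=st$, defined exactly when $s^{-1}s=tt^{-1}$; its identities are the idempotents of $S$, with $\mathbf{d}(s)=s^{-1}s$, $\mathbf{r}(s)=ss^{-1}$. For a groupoid $G$, a local bisection is a subset $A$ with $AA^{-1}$ and $A^{-1}A$ consisting only of identities, where $AB=\{ab:a\in A,b\in B,\mathbf{d}(a)=\mathbf{r}(b)\}$; $\mathsf{K}(G)$ is the inverse monoid of local bisections under this multiplication (it is a Boolean inverse monoid, and $a^{\downarrow}$ is a local bisection). Elements $a,b$ are compatible if $a^{-1}b,ab^{-1}$ are idempotents. A Boolean inverse monoid is an inverse monoid with zero in which finite compatible subsets have joins with respect to $\le$, multiplication distributes over them, and the idempotents form a Boolean algebra. A morphism of Boolean inverse monoids is a monoid homomorphism preserving zero and binary (compatible) joins. *)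

(* Defs.v *)
From Stdlib Require List.
From mathcomp Require Import all_boot.
Set Implicit Arguments. Unset Strict Implicit. Unset Printing Implicit Defensive.

Section Generic.
Variables (X : Type) (mul : X -> X -> X) (inv : X -> X).

Definition idem (e : X) : Prop := mul e e = e.

Definition nle (s t : X) : Prop := s = mul t (mul (inv s) s).

Definition compatible (a b : X) : Prop :=
  idem (mul (inv a) b) /\ idem (mul a (inv b)).

Definition pairwise_compatible (xs : list X) : Prop :=
  forall x y, List.In x xs -> List.In y xs -> compatible x y.

Definition is_join (xs : list X) (j : X) : Prop :=
  (forall x, List.In x xs -> nle x j) /\
  (forall u, (forall x, List.In x xs -> nle x u) -> nle j u).

Definition inverse_semigroup_axioms : Prop :=
  (forall a b c, mul a (mul b c) = mul (mul a b) c) /\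
  (forall s, s = mul s (mul (inv s) s) /\ inv s = mul (inv s) (mul s (inv s))) /\
  (forall s t, s = mul s (mul t s) -> t = mul t (mul s t) -> t = inv s).

Definition inverse_monoid (one : X) : Prop :=
  inverse_semigroup_axioms /\ (forall x, mul one x = x /\ mul x one = x).

Definition is_glbE (e f m : X) : Prop :=
  idem m /\ nle m e /\ nle m f /\
  (forall z, idem z -> nle z e -> nle z f -> nle z m).
Definition is_lubE (e f j : X) : Prop :=
  idem j /\ nle e j /\ nle f j /\
  (forall z, idem z -> nle e z -> nle f z -> nle j z).

Definition idempotents_boolean_algebra : Prop :=
  (exists b, idem b /\ forall e, idem e -> nle b e) /\
  (exists t, idem t /\ forall e, idem e -> nle e t) /\
  (forall e f, idem e -> idem f -> exists m, is_glbE e f m) /\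
  (forall e f, idem e -> idem f -> exists j, is_lubE e f j) /\
  (forall e f g fg efg ef eg r, idem e -> idem f -> idem g ->
     is_lubE f g fg -> is_glbE e fg efg -> is_glbE e f ef -> is_glbE e g eg ->
     is_lubE ef eg r -> efg = r) /\
  (forall e, idem e -> exists c m j, idem c /\ is_glbE e c m /\ is_lubE e c j /\
     (forall z, idem z -> nle m z) /\ (forall z, idem z -> nle z j)).

Definition boolean_inverse_monoid (one zero : X) : Prop :=
  inverse_monoid one /\
  (forall x, mul zero x = zero /\ mul x zero = zero) /\
  (forall xs, pairwise_compatible xs -> exists j, is_join xs j) /\
  (forall xs j a, pairwise_compatible xs -> is_join xs j ->
     is_join (List.map (mul a) xs) (mul a j) /\
     is_join (List.map (fun x => mul x a) xs) (mul j a)) /\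
  idempotents_boolean_algebra.

End Generic.

Definition monoid_hom (X Y : Type) (mulX : X -> X -> X) (oneX : X)
  (mulY : Y -> Y -> Y) (oneY : Y) (f : X -> Y) : Prop :=
  (forall a b, f (mulX a b) = mulY (f a) (f b)) /\ f oneX = oneY.

Definition bim_morphism (X Y : Type)
  (mulX : X -> X -> X) (oneX zeroX : X) (invX : X -> X)
  (mulY : Y -> Y -> Y) (oneY zeroY : Y) (invY : Y -> Y) (f : X -> Y) : Prop :=
  monoid_hom mulX oneX mulY oneY f /\ f zeroX = zeroY /\
  (forall a b j, compatible mulX invX a b -> is_join mulX invX [:: a; b] j ->
     is_join mulY invY [:: f a; f b] (f j)).

Section Groupoid.
Variables (S : finType) (mulS : S -> S -> S) (invS : S -> S).

Definition gdom (s : S) : S := mulS (invS s) s.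
Definition gran (s : S) : S := mulS s (invS s).
Definition composable (s t : S) : bool := gdom s == gran t.

Definition identities : {set S} := [set e | mulS e e == e].

Definition gset_mul (A B : {set S}) : {set S} :=
  [set mulS a b | a in A, b in B & composable a b].
Definition gset_inv (A : {set S}) : {set S} := invS @: A.

Definition is_local_bisection (A : {set S}) : bool :=
  (gset_mul A (gset_inv A) \subset identities) &&
  (gset_mul (gset_inv A) A \subset identities).

Definition KG := {A : {set S} | is_local_bisection A}.

Lemma set0_local_bisection : is_local_bisection set0.
Proof.
apply/andP; split; apply/subsetP => x /imset2P [a b];
  rewrite ?inE //=; move=> _ /imsetP [y]; rewrite inE.
Qed.

Definition Kzero : KG := exist _ set0 set0_local_bisection.
(* the product of two local bisections is a local bisection; insubd is only
   used to land in the subtype (the default is never needed) *)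
Definition Kmul (A B : KG) : KG := insubd Kzero (gset_mul (val A) (val B)).
Definition Kinv (A : KG) : KG := insubd Kzero (gset_inv (val A)).
Definition Kone : KG := insubd Kzero identities.

Definition downset (a : S) : {set S} := [set x | x == mulS a (mulS (invS x) x)].
Definition beta (a : S) : KG := insubd Kzero (downset a).

End Groupoid.

(* Main.v *)
Require Import Defs.
From mathcomp Require Import all_boot.
From Stdlib Require Import ClassicalEpsilon.
Set Implicit Arguments. Unset Strict Implicit. Unset Printing Implicit Defensive.


Section InvSemi.
Set Default Proof Using "All".
Variables (X : Type) (mul : X -> X -> X) (inv : X -> X).
Hypothesis H : inverse_semigroup_axioms mul inv.
Local Infix "•" := mul (at level 40, left associativity).

Lemma mulA a b c : a • (b • c) = a • b • c.
Proof. by case: H => h _; apply: h. Qed.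
Lemma lext2 x y z : x • y = z -> forall a, a • x • y = a • z.
Proof. by move=> h a; rewrite -mulA h. Qed.
Lemma lext3 x y w z : x • y • w = z -> forall a, a • x • y • w = a • z.
Proof. by move=> h a; rewrite -h !mulA. Qed.
Lemma lext4 x y w v z : x • y • w • v = z -> forall a, a • x • y • w • v = a • z.
Proof. by move=> h a; rewrite -h !mulA. Qed.
Lemma lext5 x y w v u z : x • y • w • v • u = z -> forall a, a • x • y • w • v • u = a • z.
Proof. by move=> h a; rewrite -h !mulA. Qed.

Ltac norm := rewrite ?mulA.
Ltac arw1 h := norm; first [rewrite (lext5 h) | rewrite (lext4 h) | rewrite (lext3 h) | rewrite (lext2 h) | rewrite h]; norm.
Ltac arw h := let h' := fresh "h" in have h' := h; rewrite ?/idem ?mulA in h'; norm; repeat (arw1 h'); clear h'.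

Lemma mul_inv_mul s : s • inv s • s = s.
Proof. case: H => _ [h _]; rewrite -mulA; by case: (h s) => <-. Qed.
Lemma inv_mul_inv s : inv s • s • inv s = inv s.
Proof. case: H => _ [h _]; rewrite -mulA; by case: (h s) => _ <-. Qed.
Lemma inv_uniq s t : s • t • s = s -> t • s • t = t -> t = inv s.
Proof. case: H => _ [_ h] h1 h2; apply: h; rewrite mulA //. Qed.
Lemma invK s : inv (inv s) = s.
Proof. symmetry; apply: inv_uniq; [exact: inv_mul_inv | exact: mul_inv_mul]. Qed.
Lemma idem_inv e : idem mul e -> inv e = e.
Proof. move=> he; symmetry; apply: inv_uniq; by rewrite !he. Qed.

Lemma idem_mul_idem e f : idem mul e -> idem mul f -> idem mul (e • f).
Proof.
move=> he hf.
  set b := inv (e • f).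
  have hb : f • b • e = b.
    apply: inv_uniq.
    - arw hf; arw he. rewrite /b. arw (mul_inv_mul (e • f)). done.
    - arw he; arw hf. rewrite /b. arw (inv_mul_inv (e • f)). done.
  have hbb : idem mul b.
    rewrite /idem; transitivity ((f • b • e) • (f • b • e)); first by rewrite hb.
    rewrite /b. arw (inv_mul_inv (e • f)). by rewrite -/b hb.
  have : e • f = inv b.
    apply: inv_uniq; rewrite /b.
    - arw (inv_mul_inv (e • f)). done.
    - arw (mul_inv_mul (e • f)). done.
  by rewrite idem_inv // => ->.
Qed.
Lemma idem_comm e f : idem mul e -> idem mul f -> e • f = f • e.
Proof.
move=> he hf.
have h1 := idem_mul_idem he hf; have h2 := idem_mul_idem hf he.
have : f • e = inv (e • f).
  apply: inv_uniq.
  - by arw hf; arw he; arw h1.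
  - by arw he; arw hf; arw h2.
by rewrite idem_inv.
Qed.

Lemma idem_dom s : idem mul (inv s • s).
Proof. by rewrite /idem; arw (inv_mul_inv s). Qed.
Lemma idem_ran s : idem mul (s • inv s).
Proof. by rewrite /idem; arw (mul_inv_mul s). Qed.

Lemma inv_mul s t : inv (s • t) = inv t • inv s.
Proof.
symmetry; apply: inv_uniq.
- have hc := idem_comm (idem_ran t) (idem_dom s).
  arw hc. by arw (mul_inv_mul s); arw (mul_inv_mul t).
- have hc := idem_comm (idem_dom s) (idem_ran t).
  arw hc. by arw (inv_mul_inv s); arw (inv_mul_inv t).
Qed.

Lemma nleP s t : nle mul inv s t <-> exists e, idem mul e /\ s = t • e.
Proof.
split; first by move=> h; exists (inv s • s); split => //; exact: idem_dom.
case=> e [he ->]; rewrite /nle inv_mul.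
have hc := idem_comm (idem_dom t) he.
rewrite (idem_inv he). by arw (esym hc); arw (mul_inv_mul t); arw he.
Qed.

Lemma nleP' s t : nle mul inv s t <-> exists f, idem mul f /\ s = f • t.
Proof.
rewrite nleP; split; case=> e [he ->].
- exists (t • e • inv t); split.
  + rewrite /idem. have hc := idem_comm (idem_dom t) he.
    by arw hc; arw he; arw (inv_mul_inv t).
  + have hc := idem_comm (idem_dom t) he. by arw (esym hc); arw (mul_inv_mul t).
- exists (inv t • e • t); split.
  + rewrite /idem. have hc := idem_comm (idem_ran t) he.
    by arw hc; arw he; arw (mul_inv_mul t).
  + have hc := idem_comm (idem_ran t) he. by arw hc; arw (mul_inv_mul t).
Qed.

Lemma nle_refl s : nle mul inv s s.
Proof. by rewrite /nle mulA mul_inv_mul. Qed.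

Lemma nle_trans s t u : nle mul inv s t -> nle mul inv t u -> nle mul inv s u.
Proof.
move=> /nleP [e [he ->]] /nleP [f [hf ->]]; apply/nleP.
exists (f • e); split; [exact: idem_mul_idem | by rewrite mulA].
Qed.

Lemma nle_dom s t : nle mul inv s t -> inv s • s = inv t • t • (inv s • s).
Proof.
move=> /nleP [e [he ->]]; rewrite inv_mul (idem_inv he).
have hd := idem_dom t; have hc := idem_comm hd he.
have hde := idem_mul_idem hd he.
have E1 : e • inv t • (t • e) = inv t • t • e by rewrite mulA -(mulA e) -hc -mulA he.
by rewrite E1 [in RHS]mulA hd.
Qed.

Lemma nle_antisym s t : nle mul inv s t -> nle mul inv t s -> s = t.
Proof.
move=> h1 h2.
have d1 := nle_dom h1; have d2 := nle_dom h2.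
have hc := idem_comm (idem_dom s) (idem_dom t).
have : inv s • s = inv t • t by rewrite d1 -hc -d2.
move=> e; rewrite h1 e. by rewrite mulA mul_inv_mul.
Qed.

Lemma nle_mull u s t : nle mul inv s t -> nle mul inv (u • s) (u • t).
Proof. move=> /nleP [e [he ->]]; apply/nleP; exists e; split => //; by rewrite mulA. Qed.
Lemma nle_mulr u s t : nle mul inv s t -> nle mul inv (s • u) (t • u).
Proof. move=> /nleP' [e [he ->]]; apply/nleP'; exists e; split => //; by rewrite mulA. Qed.

Lemma nle_inv s t : nle mul inv s t -> nle mul inv (inv s) (inv t).
Proof. move=> /nleP' [e [he ->]]; apply/nleP; exists e; split => //; by rewrite inv_mul (idem_inv he). Qed.

Lemma idem_nle e f : idem mul f -> nle mul inv e f -> idem mul e.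
Proof. move=> hf /nleP [g [hg ->]]; exact: idem_mul_idem. Qed.

Lemma nle_idemE e f : idem mul e -> idem mul f -> (nle mul inv e f <-> e = f • e).
Proof.
move=> he hf; split.
- by move=> h; rewrite {1}h (idem_inv he) he.
- by move=> h; apply/nleP; exists e.
Qed.

Lemma idem_compat e f : idem mul e -> idem mul f -> compatible mul inv e f.
Proof.
move=> he hf; rewrite /compatible (idem_inv he) (idem_inv hf).
split; exact: idem_mul_idem.
Qed.

Lemma inv_idem_iff e : idem mul (inv e) -> idem mul e.
Proof. move=> h; rewrite -(invK e) (idem_inv h) //. Qed.

Lemma conj_idem k u : idem mul k -> idem mul (inv u • k • u).
Proof.
move=> hk; rewrite /idem.
have hc := idem_comm (idem_ran u) hk.
by arw hc; arw hk; arw (mul_inv_mul u).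
Qed.

Lemma conj_back g y : idem mul g -> g = y • inv y • g -> y • inv y • g • y • inv y = g.
Proof.
move=> hg h.
have hc := idem_comm (idem_ran y) hg.
rewrite -h -(mulA g) -hc; exact: (esym h).
Qed.

Lemma conj_mul g y : g = y • inv y • g -> y • inv y • g • y = g • y.
Proof. by move=> h; rewrite -h. Qed.

Lemma conj_le g y : idem mul g -> inv y • g • y = inv y • y • (inv y • g • y).
Proof. move=> hg. by arw (inv_mul_inv y). Qed.

End InvSemi.

Ltac normH H := rewrite ?(mulA H).
Ltac arw1H H h := normH H; first [rewrite (lext5 H h) | rewrite (lext4 H h) | rewrite (lext3 H h) | rewrite (lext2 H h) | rewrite h]; normH H.
Ltac arwH H h := let h' := fresh "h" in have h' := h; rewrite ?/idem ?(mulA H) in h'; normH H; repeat (arw1H H h'); clear h'.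


Lemma bim_isa (X : Type) (mul : X -> X -> X) (inv : X -> X) (one zero : X) :
  boolean_inverse_monoid mul inv one zero -> inverse_semigroup_axioms mul inv.
Proof. by case => [[h _] _]. Qed.

Section BIM.
Set Default Proof Using "All".
Variables (X : Type) (mul : X -> X -> X) (inv : X -> X) (one zero : X).
Hypothesis HB : boolean_inverse_monoid mul inv one zero.
Local Infix "•" := mul (at level 40, left associativity).
Local Notation le := (nle mul inv).
Local Notation Jn := (is_join mul inv).

Hypothesis HI : inverse_semigroup_axioms mul inv.
Local Notation mA := (mulA HI).
Lemma mul1x x : one • x = x.
Proof. by case: HB => [[_ h] _]; case: (h x). Qed.
Lemma mulx1 x : x • one = x.
Proof. by case: HB => [[_ h] _]; case: (h x). Qed.
Lemma mul0x x : zero • x = zero.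
Proof. by case: HB => [_ [h _]]; case: (h x). Qed.
Lemma mulx0 x : x • zero = zero.
Proof. by case: HB => [_ [h _]]; case: (h x). Qed.
Lemma idem0 : idem mul zero.
Proof. exact: mul0x. Qed.
Lemma idem1 : idem mul one.
Proof. exact: mul1x. Qed.
Lemma inv0 : inv zero = zero.
Proof. exact: (idem_inv HI idem0). Qed.
Lemma le0x x : le zero x.
Proof. by rewrite /nle inv0 !mulx0. Qed.
Lemma lex0 x : le x zero -> x = zero.
Proof. by rewrite /nle mul0x. Qed.
Lemma idem_le1 e : idem mul e -> le e one.
Proof. move=> he; apply/(nle_idemE HI he idem1). by rewrite mul1x. Qed.

Lemma joinP xs j : Jn xs j <-> forall u, (le j u <-> forall x, List.In x xs -> le x u).
Proof.
split.
- case=> h1 h2 u; split; last exact: h2.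
  move=> hju x hx; exact: (nle_trans HI (h1 x hx) hju).
- move=> h; split.
  + by apply/h; apply: (nle_refl HI).
  + by move=> u /h.
Qed.

Lemma join_uniq xs j j' : Jn xs j -> Jn xs j' -> j = j'.
Proof.
case=> h1 h2 [h1' h2']; apply: (nle_antisym HI); [exact: h2 | exact: h2'].
Qed.

Lemma join_ext0 xs ys j :
  (forall x, List.In x xs -> x = zero \/ List.In x ys) ->
  (forall x, List.In x ys -> x = zero \/ List.In x xs) -> Jn xs j -> Jn ys j.
Proof.
move=> A B /joinP h; apply/joinP => u; rewrite h; split => hu x hx.
- case: (B x hx) => [->|]; [exact: le0x | exact: hu].
- case: (A x hx) => [->|]; [exact: le0x | exact: hu].
Qed.

Lemma join_ext xs ys j : (forall x, List.In x xs <-> List.In x ys) -> Jn xs j -> Jn ys j.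
Proof. move=> h; apply: join_ext0 => x /h; by right. Qed.

Lemma join_nil : Jn [::] zero.
Proof. apply/joinP => u; split => // _; exact: le0x. Qed.

Lemma join_single x : Jn [:: x] x.
Proof.
apply/joinP => u; split; first by move=> h y [<-|].
move=> h; apply: h; by left.
Qed.

Lemma join_flatten (I : Type) (l : list I) (f : I -> list X) (g : I -> X) j :
  (forall i, List.In i l -> Jn (f i) (g i)) ->
  (Jn (List.map g l) j <-> Jn (List.concat (List.map f l)) j).
Proof.
move=> hl; rewrite !joinP; split => h u; rewrite h; split.
- move=> hu x /List.in_concat [ys [/List.in_map_iff [i [<- hi]] hx]].
  have /joinP hfi := hl i hi.
  have := (proj1 (hfi u)); apply; last exact: hx.
  apply: hu; apply/List.in_map_iff; by exists i.
- move=> hu x /List.in_map_iff [i [<- hi]].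
  have /joinP hfi := hl i hi; apply/hfi => y hy; apply: hu.
  apply/List.in_concat; exists (f i); split => //; apply/List.in_map_iff; by exists i.
- move=> hu x /List.in_map_iff [i [<- hi]].
  have /joinP hfi := hl i hi; apply/hfi => y hy; apply: hu.
  apply/List.in_concat; exists (f i); split => //; apply/List.in_map_iff; by exists i.
- move=> hu x /List.in_concat [ys [/List.in_map_iff [i [<- hi]] hx]].
  have /joinP hfi := hl i hi.
  have := (proj1 (hfi u)); apply; last exact: hx.
  apply: hu; apply/List.in_map_iff; by exists i.
Qed.

Lemma join_exists xs : pairwise_compatible mul inv xs -> exists j, Jn xs j.
Proof. by case: HB => [_ [_ [h _]]]; apply: h. Qed.

Lemma join_mull a xs j : pairwise_compatible mul inv xs -> Jn xs j ->
  Jn (List.map (mul a) xs) (a • j).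
Proof. by case: HB => [_ [_ [_ [h _]]]] h1 h2; case: (h xs j a h1 h2). Qed.
Lemma join_mulr a xs j : pairwise_compatible mul inv xs -> Jn xs j ->
  Jn (List.map (fun x => x • a) xs) (j • a).
Proof. by case: HB => [_ [_ [_ [h _]]]] h1 h2; case: (h xs j a h1 h2). Qed.

Lemma pc_idem xs : (forall x, List.In x xs -> idem mul x) -> pairwise_compatible mul inv xs.
Proof. move=> h x y hx hy; apply: (idem_compat HI); [exact: h | exact: h]. Qed.

Lemma join_le xs j x : Jn xs j -> List.In x xs -> le x j.
Proof. by case=> h _; apply: h. Qed.

Lemma join_least xs j u : Jn xs j -> (forall x, List.In x xs -> le x u) -> le j u.
Proof. by case=> _ h; apply: h. Qed.

Lemma idem_join xs j : (forall x, List.In x xs -> idem mul x) -> Jn xs j -> idem mul j.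
Proof.
move=> hx hj; apply: (idem_nle HI idem1); apply: (join_least hj) => x /hx.
exact: idem_le1.
Qed.

Lemma complement n : idem mul n -> exists c, idem mul c /\ n • c = zero /\ Jn [:: c; n] one.
Proof.
move=> hn.
case: HB => [_ [_ [_ [_ [_ [_ [_ [_ [_ hc]]]]]]]]].
case: (hc n hn) => c [m [j [hcc [hm [hj [hmb hjt]]]]]].
exists c; split => //; split.
- case: hm => [hmm [hmn [hmc hmg]]].
  have hnc := idem_mul_idem HI hn hcc.
  have h1 : le (n • c) m.
    apply: hmg => //.
    + apply/(nle_idemE HI hnc hn); by rewrite mA hn.
    + apply/(nle_idemE HI hnc hcc); rewrite (idem_comm HI hn hcc).
      by rewrite mA hcc.
  apply: lex0; apply: (nle_trans HI h1); apply: hmb; exact: idem0.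
- have pc : pairwise_compatible mul inv [:: c; n].
    by apply: pc_idem => x [<-|[<-|]].
  case: (join_exists pc) => J0 hJ0.
  have hJi : idem mul J0 by apply: (idem_join _ hJ0) => x [<-|[<-|]].
  have hJ1 : le J0 one.
    by apply: (join_least hJ0) => x [<-|[<-|]] //; apply: idem_le1.
  have h1J : le one J0.
    apply: (nle_trans HI (hjt _ idem1)).
    case: hj => [_ [_ [_ hjl]]]; apply: hjl => //.
    + apply: (join_le hJ0); by right; left.
    + apply: (join_le hJ0); by left.
  by rewrite -(nle_antisym HI hJ1 h1J).
Qed.

Lemma rc_exists n E : idem mul n -> idem mul E -> le n E ->
  exists p, idem mul p /\ p • n = zero /\ Jn [:: p; n] E.
Proof.
move=> hn hE hnE.
case: (complement hn) => c [hc [hnc hj]].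
have pc : pairwise_compatible mul inv [:: c; n] by apply: pc_idem => x [<-|[<-|]].
have := join_mull E pc hj; rewrite mulx1 /= -(proj1 (nle_idemE HI hn hE) hnE) => hj'.
exists (E • c); split; first exact: (idem_mul_idem HI).
split => //.
by rewrite -mA (idem_comm HI hc hn) hnc mulx0.
Qed.

Lemma rc_uniq n E p q : idem mul n -> idem mul p -> idem mul q ->
  p • n = zero -> q • n = zero -> Jn [:: p; n] E -> Jn [:: q; n] E -> p = q.
Proof.
move=> hn hp hq hpn hqn hjp hjq.
have key : forall p q, idem mul p -> idem mul q -> p • n = zero -> Jn [:: p; n] E ->
   Jn [:: q; n] E -> p = p • q.
  move=> {hpn hqn hjp hjq hp hq} p' q' hp hq hpn hjp hjq.
  have pc : pairwise_compatible mul inv [:: q'; n] by apply: pc_idem => x [<-|[<-|]].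
  have := join_mull p' pc hjq; rewrite /= hpn => h.
  have hpE : le p' E by apply: (join_le hjp); left.
  have hE : idem mul E by apply: (idem_join _ hjp) => x [<-|[<-|]].
  have : p' • E = p'.
    rewrite (idem_comm HI hp hE); symmetry; exact/(nle_idemE HI hp hE).
  move=> e; rewrite e in h.
  have h2 : Jn [:: p' • q'; zero] (p' • q').
    apply: join_ext0 (join_single (p' • q')).
    - move=> x [<-|[]]; right; by left.
    - move=> x [<-|[<-|[]]]; [right; by left | by left].
  exact: (join_uniq h h2).
rewrite (key p q) //; rewrite [in RHS](key q p) //.
exact: (idem_comm HI hp hq).
Qed.

Local Ltac arw h := arwH HI h.

Lemma join_cons a xs j k : Jn xs j -> (Jn [:: a; j] k <-> Jn (a :: xs) k).
Proof.
move=> /joinP hj; rewrite !joinP; split => h u; rewrite h; split.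
- move=> hu x [<-|hx]; first by apply: hu; left.
  move: x hx; apply/hj; apply: hu; by right; left.
- move=> hu x [<-|[<-|[]]]; first by apply: hu; left.
  by apply/hj => y hy; apply: hu; right.
- move=> hu x [<-|[<-|[]]]; first by apply: hu; left.
  by apply/hj => y hy; apply: hu; right.
- move=> hu x [<-|hx]; first by apply: hu; left.
  move: x hx; apply/hj; apply: hu; by right; left.
Qed.

Lemma compat_conj u a b : idem mul a -> idem mul b -> compatible mul inv (inv u • a) (inv u • b).
Proof.
move=> ha hb; split.
- rewrite (inv_mul HI) (idem_inv HI ha) (invK HI).
  have -> : a • u • (inv u • b) = a • (u • inv u) • b by rewrite !mA.
  apply: (idem_mul_idem HI) => //; apply: (idem_mul_idem HI) => //; exact: (idem_ran HI).
- rewrite (inv_mul HI) (idem_inv HI hb) (invK HI).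
  have := conj_idem HI u (idem_mul_idem HI ha hb). by rewrite !mA.
Qed.

Lemma pc_conj u a b : idem mul a -> idem mul b -> pairwise_compatible mul inv [:: inv u • a; inv u • b].
Proof.
move=> ha hb x y [<-|[<-|[]]] [<-|[<-|[]]]; exact: compat_conj.
Qed.

Lemma pc2 a b : idem mul a -> idem mul b -> pairwise_compatible mul inv [:: a; b].
Proof. by move=> ha hb; apply: pc_idem => x [<-|[<-|[]]]. Qed.

Lemma rc_conj u n1 n2 p1 p2 :
  idem mul n1 -> idem mul n2 -> le n2 (inv u • u) -> n1 • u = u • n2 ->
  idem mul p1 -> p1 • n1 = zero -> Jn [:: p1; n1] (u • inv u) ->
  idem mul p2 -> p2 • n2 = zero -> Jn [:: p2; n2] (inv u • u) ->
  u • p2 = p1 • u.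
Proof.
move=> hn1 hn2 hle hnu hp1 hpn1 hj1 hp2 hpn2 hj2.
have e2 : n2 = inv u • u • n2 by apply/(nle_idemE HI hn2 (idem_dom HI u)).
have hq : idem mul (inv u • p1 • u) by apply: (conj_idem HI).
have hqn : inv u • p1 • u • n2 = zero.
  by rewrite -mA -hnu mA -(mA _ p1) hpn1 mulx0 mul0x.
have hjq : Jn [:: inv u • p1 • u; n2] (inv u • u).
  have h1 := join_mull (inv u) (pc2 hp1 hn1) hj1.
  have h2 := join_mulr u (pc_conj (u:=u) hp1 hn1) h1.
  move: h2 => /=; rewrite mA (inv_mul_inv HI).
  have -> : inv u • n1 • u = n2 by rewrite -mA hnu mA -e2.
  done.
have := rc_uniq hn2 hp2 hq hpn2 hqn hj2 hjq => ->.
have hp1le : le p1 (u • inv u) by apply: (join_le hj1); left.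
have e1 : p1 = u • inv u • p1 by apply/(nle_idemE HI hp1 (idem_ran HI u)).
by rewrite !mA -e1.
Qed.

End BIM.


Section GS.
Set Default Proof Using "All".
Variables (S : finType) (mulS : S -> S -> S) (invS : S -> S).
Hypothesis HS : inverse_semigroup_axioms mulS invS.
Local Infix "•" := mulS (at level 40, left associativity).
Local Notation d := (gdom mulS invS).
Local Notation r := (gran mulS invS).
Local Notation mA := (mulA HS).
Local Ltac arw h := arwH HS h.

Lemma gset_mulP (A B : {set S}) z : reflect (exists a b, [/\ a \in A, b \in B, composable mulS invS a b & z = mulS a b]) (z \in gset_mul mulS invS A B).
Proof.
apply: (iffP idP).
- case/imset2P => a b ha; rewrite inE => /andP [hb hc] ->. by exists a, b.
- case=> a [b [ha hb hc ->]]; apply/imset2P; exists a b => //; by rewrite inE hb hc.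
Qed.

Lemma gset_invP (A : {set S}) z : (z \in gset_inv invS A) = (invS z \in A).
Proof.
apply/imsetP/idP.
- by case=> a ha ->; rewrite (invK HS).
- move=> h; exists (invS z) => //; by rewrite (invK HS).
Qed.

Lemma identitiesP e : (e \in identities mulS) = (e • e == e).
Proof. by rewrite inE. Qed.

Lemma d_inv s : d (invS s) = r s.
Proof. by rewrite /gdom /gran (invK HS). Qed.
Lemma r_inv s : r (invS s) = d s.
Proof. by rewrite /gdom /gran (invK HS). Qed.
Lemma idem_d s : idem mulS (d s).
Proof. exact: (idem_dom HS). Qed.
Lemma idem_r s : idem mulS (r s).
Proof. exact: (idem_ran HS). Qed.
Lemma d_idem e : idem mulS e -> d e = e.
Proof. by move=> he; rewrite /gdom (idem_inv HS he) he. Qed.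
Lemma r_idem e : idem mulS e -> r e = e.
Proof. by move=> he; rewrite /gran (idem_inv HS he) he. Qed.
Lemma d_mul s t : d s = r t -> d (s • t) = d t.
Proof.
rewrite /gdom /gran => h; rewrite (inv_mul HS).
by arw h; arw (inv_mul_inv HS t).
Qed.
Lemma r_mul s t : d s = r t -> r (s • t) = r s.
Proof.
rewrite /gdom /gran => h; rewrite (inv_mul HS).
by arw (esym h); arw (mul_inv_mul HS s).
Qed.
Lemma r_mul_s s : r s • s = s.
Proof. exact: (mul_inv_mul HS). Qed.
Lemma mul_d s : s • d s = s.
Proof. rewrite /gdom mA; exact: (mul_inv_mul HS). Qed.

Definition dinj (A : {set S}) := forall a b, a \in A -> b \in A -> d a = d b -> a = b.
Definition rinj (A : {set S}) := forall a b, a \in A -> b \in A -> r a = r b -> a = b.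

Lemma LBP (A : {set S}) : is_local_bisection mulS invS A <-> dinj A /\ rinj A.
Proof.
split.
- case/andP => /subsetP h1 /subsetP h2; split.
  + move=> a b ha hb hd.
    have hab : a • invS b \in gset_mul mulS invS A (gset_inv invS A).
      apply/gset_mulP; exists a, (invS b); split => //.
      * by rewrite gset_invP (invK HS).
      * by rewrite /composable r_inv hd.
    have /h1 := hab; rewrite identitiesP => /eqP he.
    have hc : d a = r (invS b) by rewrite r_inv.
    have e1 := r_mul hc; have e2 := d_mul hc.
    rewrite (r_idem he) in e1; rewrite (d_idem he) d_inv in e2.
    have : a • invS b • b = a by rewrite -mA -/(d b) -hd mul_d.
    by rewrite e2 r_mul_s => ->.
  + move=> a b ha hb hr.
    have hab : invS a • b \in gset_mul mulS invS (gset_inv invS A) A.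
      apply/gset_mulP; exists (invS a), b; split => //.
      * by rewrite gset_invP (invK HS).
      * by rewrite /composable d_inv hr.
    have /h2 := hab; rewrite identitiesP => /eqP he.
    have hc : d (invS a) = r b by rewrite d_inv.
    have e1 := r_mul hc; have e2 := d_mul hc.
    rewrite (r_idem he) r_inv in e1; rewrite (d_idem he) in e2.
    have : a • (invS a • b) = b by rewrite mA -/(r a) hr r_mul_s.
    by rewrite e1 mul_d => ->.
- case=> hd hr; apply/andP; split; apply/subsetP => z /gset_mulP [a [b [ha hb hc ->]]].
  + rewrite gset_invP in hb; move/eqP: hc; rewrite -{1}(invK HS b) r_inv => hc.
    rewrite -{1}(invK HS b) -(hd _ _ ha hb hc) identitiesP; apply/eqP; exact: (idem_ran HS).
  + rewrite gset_invP in ha; move/eqP: hc; rewrite -{1}(invK HS a) d_inv => hc.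
    rewrite -(hr _ _ ha hb hc) identitiesP; apply/eqP; exact: (idem_ran HS).
Qed.


Local Notation LB := (is_local_bisection mulS invS).
Local Notation K := (KG mulS invS).

Lemma LB_sub (A B : {set S}) : A \subset B -> LB B -> LB A.
Proof.
move=> /subsetP hs /LBP [hd hr]; apply/LBP; split => a b ha hb h.
- exact: hd (hs _ ha) (hs _ hb) h.
- exact: hr (hs _ ha) (hs _ hb) h.
Qed.

Lemma LB_mul (A B : {set S}) : LB A -> LB B -> LB (gset_mul mulS invS A B).
Proof.
move=> /LBP [hdA hrA] /LBP [hdB hrB]; apply/LBP; split.
- move=> z1 z2 /gset_mulP [a1 [b1 [ha1 hb1 /eqP hc1 ->]]] /gset_mulP [a2 [b2 [ha2 hb2 /eqP hc2 ->]]].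
  rewrite (d_mul hc1) (d_mul hc2) => hd.
  have eb := hdB _ _ hb1 hb2 hd; subst b2.
  have ea : a1 = a2 by apply: hdA => //; rewrite hc1 hc2.
  by subst.
- move=> z1 z2 /gset_mulP [a1 [b1 [ha1 hb1 /eqP hc1 ->]]] /gset_mulP [a2 [b2 [ha2 hb2 /eqP hc2 ->]]].
  rewrite (r_mul hc1) (r_mul hc2) => hr.
  have ea := hrA _ _ ha1 ha2 hr; subst a2.
  have eb : b1 = b2 by apply: hrB => //; rewrite -hc1 -hc2.
  by subst.
Qed.

Lemma LB_inv (A : {set S}) : LB A -> LB (gset_inv invS A).
Proof.
move=> /LBP [hd hr]; apply/LBP; split => a b; rewrite !gset_invP => ha hb h.
- rewrite -(invK HS a) -(invK HS b); congr invS; apply: hr => //; by rewrite !r_inv.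
- rewrite -(invK HS a) -(invK HS b); congr invS; apply: hd => //; by rewrite !d_inv.
Qed.

Lemma LB_identities : LB (identities mulS).
Proof.
apply/LBP; split => a b; rewrite !identitiesP => /eqP ha /eqP hb.
- by rewrite (d_idem ha) (d_idem hb).
- by rewrite (r_idem ha) (r_idem hb).
Qed.

Lemma nle_r y a : nle mulS invS y a -> y = r y • a.
Proof.
move=> /(nleP' HS) [f [hf ->]]; rewrite /gran (inv_mul HS) (idem_inv HS hf).
have hc := idem_comm HS (idem_ran HS a) hf.
by arw hc; arw hf; arw (mul_inv_mul HS a).
Qed.

Lemma downsetP a y : (y \in downset mulS invS a) = (y == a • (invS y • y)).
Proof. by rewrite inE. Qed.

Lemma LB_downset a : LB (downset mulS invS a).
Proof.
apply/LBP; split => y1 y2; rewrite !downsetP => /eqP h1 /eqP h2 h.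
- by rewrite h1 h2; congr (a • _).
- have e1 := nle_r h1; have e2 := nle_r h2.
  by rewrite e1 e2 h.
Qed.

Lemma LB_set1 x : LB [set x].
Proof. apply/LBP; split => a b; rewrite !inE => /eqP -> /eqP -> //. Qed.

Lemma valK (X : {set S}) : LB X -> val (insubd (Kzero mulS invS) X : K) = X.
Proof. move=> h; exact: insubdK. Qed.

Lemma valKmul (A B : K) : val (Kmul A B) = gset_mul mulS invS (val A) (val B).
Proof. rewrite /Kmul valK //; apply: LB_mul; exact: valP. Qed.
Lemma valKinv (A : K) : val (Kinv A) = gset_inv invS (val A).
Proof. rewrite /Kinv valK //; apply: LB_inv; exact: valP. Qed.
Lemma valKone : val (Kone mulS invS) = identities mulS.
Proof. rewrite /Kone valK //; exact: LB_identities. Qed.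
Lemma valbeta a : val (beta mulS invS a) = downset mulS invS a.
Proof. rewrite /beta valK //; exact: LB_downset. Qed.
Lemma valKzero : val (Kzero mulS invS) = set0.
Proof. by []. Qed.

Definition sing x : K := insubd (Kzero mulS invS) [set x].
Lemma valsing x : val (sing x) = [set x].
Proof. rewrite /sing valK //; exact: LB_set1. Qed.

Lemma invA_A (A : {set S}) : LB A -> gset_mul mulS invS (gset_inv invS A) A = d @: A.
Proof.
move=> /LBP [hd hr]; apply/setP => z; apply/gset_mulP/imsetP.
- case=> a [b [ha hb /eqP hc ->]]; rewrite gset_invP in ha.
  rewrite -{1}(invK HS a) d_inv in hc.
  rewrite -(hr _ _ ha hb hc); exists (invS a) => //; by rewrite /gdom (invK HS).
- case=> a ha ->; exists (invS a), a; split => //.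
  + by rewrite gset_invP (invK HS).
  + by rewrite /composable d_inv.
Qed.

Lemma KleP (A B : K) : nle (@Kmul S mulS invS) (@Kinv S mulS invS) A B <-> val A \subset val B.
Proof.
have hA := valP A; have hB := valP B.
rewrite /nle; split.
- move=> h; apply/subsetP => a ha.
  have : a \in val (Kmul B (Kmul (Kinv A) A)) by rewrite -h.
  rewrite valKmul valKmul valKinv (invA_A hA).
  case/gset_mulP => b [z [hb /imsetP [a' ha' ->] /eqP hc ->]].
  rewrite (r_idem (idem_d _)) in hc.
  by rewrite -hc mul_d.
- move=> /subsetP hs; apply: val_inj; rewrite valKmul valKmul valKinv (invA_A hA).
  apply/setP => z; apply/idP/gset_mulP.
  + move=> hz; exists z, (d z); split.
    * exact: hs.
    * by apply/imsetP; exists z.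
    * by rewrite /composable (r_idem (idem_d _)).
    * by rewrite mul_d.
  + case=> b [z' [hb /imsetP [a ha ->] /eqP hc ->]].
    rewrite (r_idem (idem_d _)) in hc.
    case/LBP: hB => hdB _.
    by rewrite (hdB _ _ hb (hs _ ha) hc) mul_d.
Qed.

Lemma idem_sub_identities (X : {set S}) : LB X -> gset_mul mulS invS X X = X -> X \subset identities mulS.
Proof.
move=> /LBP [hd hr] h; apply/subsetP => x hx.
have : x \in gset_mul mulS invS X X by rewrite h.
case/gset_mulP => a [b [ha hb /eqP hc ex]].
have ea : x = a by apply: hr => //; rewrite ex (r_mul hc).
have eb : x = b by apply: hd => //; rewrite ex (d_mul hc).
rewrite identitiesP; apply/eqP; rewrite {3}ex -ea -eb //.
Qed.

Lemma identities_idem (X : {set S}) : X \subset identities mulS -> gset_mul mulS invS X X = X.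
Proof.
move=> /subsetP hs; apply/setP => z; apply/gset_mulP/idP.
- case=> a [b [ha hb /eqP hc ->]].
  have /hs := ha; rewrite identitiesP => /eqP ea.
  have /hs := hb; rewrite identitiesP => /eqP eb.
  rewrite (d_idem ea) (r_idem eb) in hc; subst b; by rewrite ea.
- move=> hz; exists z, z.
  have /hs := hz; rewrite identitiesP => /eqP ez.
  split => //; by rewrite /composable (d_idem ez) (r_idem ez).
Qed.

Lemma Kidem (A : K) : idem (@Kmul S mulS invS) A <-> val A \subset identities mulS.
Proof.
rewrite /idem; split.
- move=> h; apply: idem_sub_identities; first exact: valP.
  by rewrite -valKmul h.
- move=> h; apply: val_inj; rewrite valKmul; exact: identities_idem.
Qed.

Lemma Kcompat_union (A B : K) : compatible (@Kmul S mulS invS) (@Kinv S mulS invS) A B ->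
  LB (val A :|: val B).
Proof.
case=> /Kidem h1 /Kidem h2.
rewrite valKmul valKinv in h1; rewrite valKmul valKinv in h2.
move/subsetP: h1 => h1; move/subsetP: h2 => h2.
have hA := valP A; have hB := valP B.
case/LBP: (hA) => hdA hrA; case/LBP: (hB) => hdB hrB.
have cr : forall a b, a \in val A -> b \in val B -> r a = r b -> a = b.
  move=> a b ha hb hab.
  have hz : invS a • b \in gset_mul mulS invS (gset_inv invS (val A)) (val B).
    apply/gset_mulP; exists (invS a), b; split => //.
    - by rewrite gset_invP (invK HS).
    - by rewrite /composable d_inv hab.
  have /h1 := hz; rewrite identitiesP => /eqP he.
  have hc : d (invS a) = r b by rewrite d_inv.
  have e1 := r_mul hc; have e2 := d_mul hc.
  rewrite (r_idem he) r_inv in e1; rewrite (d_idem he) in e2.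
  have : a • (invS a • b) = b by rewrite mA -/(r a) hab r_mul_s.
  by rewrite e1 mul_d => ->.
have cd : forall a b, a \in val A -> b \in val B -> d a = d b -> a = b.
  move=> a b ha hb hab.
  have hz : a • invS b \in gset_mul mulS invS (val A) (gset_inv invS (val B)).
    apply/gset_mulP; exists a, (invS b); split => //.
    - by rewrite gset_invP (invK HS).
    - by rewrite /composable r_inv hab.
  have /h2 := hz; rewrite identitiesP => /eqP he.
  have hc : d a = r (invS b) by rewrite r_inv.
  have e1 := r_mul hc; have e2 := d_mul hc.
  rewrite (r_idem he) in e1; rewrite (d_idem he) d_inv in e2.
  have : a • invS b • b = a by rewrite -mA -/(d b) -hab mul_d.
  by rewrite e2 r_mul_s => ->.
apply/LBP; split => a b; rewrite !inE => /orP [ha|ha] /orP [hb|hb] h.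
- exact: hdA.
- exact: cd.
- symmetry; apply: cd => //.
- exact: hdB.
- exact: hrA.
- exact: cr.
- symmetry; apply: cr => //.
- exact: hrB.
Qed.

Lemma union_compat (A B : K) : LB (val A :|: val B) ->
  compatible (@Kmul S mulS invS) (@Kinv S mulS invS) A B.
Proof.
case/LBP => hd hr; split; apply/Kidem; rewrite valKmul valKinv; apply/subsetP => z /gset_mulP [a [b [ha hb /eqP hc ->]]].
- rewrite gset_invP in ha; rewrite -{1}(invK HS a) d_inv in hc.
  have e : invS a = b by apply: hr => //; rewrite inE ?ha ?hb ?orbT.
  rewrite -e identitiesP; apply/eqP; exact: (idem_ran HS).
- rewrite gset_invP in hb; rewrite -{1}(invK HS b) r_inv in hc.
  have e : a = invS b by apply: hd => //; rewrite inE ?ha ?hb ?orbT.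
  rewrite e identitiesP; apply/eqP; exact: (idem_dom HS).
Qed.

Lemma union_join (A B C : K) : val C = val A :|: val B ->
  is_join (@Kmul S mulS invS) (@Kinv S mulS invS) [:: A; B] C.
Proof.
move=> hC; split.
- move=> x [<-|[<-|[]]]; apply/KleP; rewrite hC; [exact: subsetUl | exact: subsetUr].
- move=> u hu; apply/KleP; rewrite hC subUset; apply/andP; split; apply/KleP; apply: hu; [by left | by right; left].
Qed.

Lemma compat_join_union (A B C : K) : compatible (@Kmul S mulS invS) (@Kinv S mulS invS) A B ->
  is_join (@Kmul S mulS invS) (@Kinv S mulS invS) [:: A; B] C -> val C = val A :|: val B.
Proof.
move=> /Kcompat_union hU [hub hl].
set D : K := insubd (Kzero mulS invS) (val A :|: val B).
have hD : val D = val A :|: val B by rewrite valK.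
apply/eqP; rewrite eqEsubset; apply/andP; split.
- rewrite -hD; apply/KleP; apply: hl => x [<-|[<-|[]]]; apply/KleP; rewrite hD; [exact: subsetUl | exact: subsetUr].
- rewrite subUset; apply/andP; split; apply/KleP; apply: hub; [by left | by right; left].
Qed.

End GS.


Lemma InE (T : eqType) (x : T) (s : seq T) : List.In x s <-> x \in s.
Proof.
elim: s => //= y s IH; rewrite in_cons; split.
- case=> [->|/IH ->]; [by rewrite eqxx | by rewrite orbT].
- case/orP => [/eqP ->|/IH]; [by left | by right].
Qed.

Lemma In_enum (T : finType) (A : {set T}) x : List.In x (enum A) <-> x \in A.
Proof. by rewrite InE mem_enum. Qed.

Section Main.
Set Default Proof Using "All".
Variables (S : finType) (mulS : S -> S -> S) (oneS : S) (invS : S -> S).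
Hypothesis HS : inverse_monoid mulS invS oneS.
Variables (T : Type) (mulT : T -> T -> T) (oneT zeroT : T) (invT : T -> T).
Hypothesis HT : boolean_inverse_monoid mulT invT oneT zeroT.
Variable alpha : S -> T.
Hypothesis Ha : monoid_hom mulS oneS mulT oneT alpha.

Local Notation HSi := (proj1 HS).
Local Notation HTi := (bim_isa HT).
Local Infix "•" := mulS (at level 40, left associativity).
Local Infix "⋆" := mulT (at level 40, left associativity).
Local Notation d := (gdom mulS invS).
Local Notation r := (gran mulS invS).
Local Notation K := (KG mulS invS).
Local Notation JT := (is_join mulT invT).
Local Notation leT := (nle mulT invT).
Local Notation mS := (mulA HSi).
Local Notation mT := (mulA HTi).
Local Ltac arwS h := arwH (proj1 HS) h.
Local Ltac arwT h := arwH (bim_isa HT) h.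

Lemma amul a b : alpha (a • b) = alpha a ⋆ alpha b.
Proof. by case: Ha. Qed.
Lemma aone : alpha oneS = oneT.
Proof. by case: Ha. Qed.
Lemma ainv s : alpha (invS s) = invT (alpha s).
Proof.
apply: (inv_uniq HTi); rewrite -!amul.
- by rewrite (mul_inv_mul HSi).
- by rewrite (inv_mul_inv HSi).
Qed.
Lemma aidem e : idem mulS e -> idem mulT (alpha e).
Proof. by rewrite /idem -amul => ->. Qed.

Definition idS e := (e • e == e).
Lemma idSP e : reflect (idem mulS e) (idS e).
Proof. exact: eqP. Qed.

Definition downI e : {set S} := [set f | idS f && (f == e • f)].
Definition below e : {set S} := [set f | [&& idS f, (f == e • f) & (f != e)]].

Definition Nj e := epsilon (inhabits zeroT) (fun j => JT (List.map alpha (enum (below e))) j).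
Definition pi e := epsilon (inhabits zeroT)
  (fun p => idem mulT p /\ p ⋆ Nj e = zeroT /\ JT [:: p; Nj e] (alpha e)).
Definition gx x := alpha x ⋆ pi (d x).
Definition gam (A : K) := epsilon (inhabits zeroT) (fun j => JT (List.map gx (enum (val A))) j).

Lemma in_mapP (A : Type) (f : S -> A) (s : {set S}) y :
  List.In y (List.map f (enum s)) <-> exists x, x \in s /\ y = f x.
Proof.
rewrite List.in_map_iff; split; case=> x [h1 h2]; exists x; split.
- by rewrite -In_enum.
- by [].
- by [].
- by rewrite In_enum.
Qed.

Lemma Nj_spec e : JT (List.map alpha (enum (below e))) (Nj e).
Proof.
rewrite /Nj; apply: (epsilon_spec (inhabits zeroT)); apply: (join_exists HT HTi); apply: (pc_idem HT HTi).
move=> x /in_mapP [f [hf ->]]; apply: aidem; move: hf; rewrite inE => /and3P [/idSP h _ _] //.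
Qed.

Lemma Nj_idem e : idem mulT (Nj e).
Proof.
apply: (idem_join HT HTi _ (Nj_spec e)).
move=> x /in_mapP [f [hf ->]]; apply: aidem; move: hf; rewrite inE => /and3P [/idSP h _ _] //.
Qed.

Lemma Nj_le e : idem mulS e -> leT (Nj e) (alpha e).
Proof.
move=> he; apply: (join_least HT HTi (Nj_spec e)) => x /in_mapP [f [hf ->]].
move: hf; rewrite inE => /and3P [/idSP hf /eqP ef _].
apply/(nle_idemE HTi (aidem hf) (aidem he)); by rewrite -amul -ef.
Qed.

Lemma pi_spec e : idem mulS e ->
  idem mulT (pi e) /\ pi e ⋆ Nj e = zeroT /\ JT [:: pi e; Nj e] (alpha e).
Proof.
move=> he; rewrite /pi.
exact: (epsilon_spec (inhabits zeroT) (fun p => idem mulT p /\ p ⋆ Nj e = zeroT /\ JT [:: p; Nj e] (alpha e))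
   (rc_exists HT HTi (Nj_idem e) (aidem he) (Nj_le he))).
Qed.

Lemma pi_idem e : idem mulS e -> idem mulT (pi e).
Proof. by case/pi_spec. Qed.

Lemma pi_le e : idem mulS e -> pi e = alpha e ⋆ pi e.
Proof.
move=> he; case: (pi_spec he) => hp [_ hj].
apply/(nle_idemE HTi hp (aidem he)); apply: (join_le HT HTi hj); by left.
Qed.
Lemma pi_le' e : idem mulS e -> pi e = pi e ⋆ alpha e.
Proof. move=> he; rewrite (idem_comm HTi (pi_idem he) (aidem he)); exact: pi_le. Qed.

Lemma orth_aux e f : idem mulS e -> idem mulS f -> e • f != e -> pi e ⋆ pi f = zeroT.
Proof.
move=> he hf hne.
have hef : e • f \in below e.
  rewrite inE; apply/and3P; split => //.
  - apply/idSP; exact: (idem_mul_idem HSi).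
  - by rewrite mS he.
have hle : leT (alpha (e • f)) (Nj e).
  apply: (join_le HT HTi (Nj_spec e)); apply/in_mapP; by exists (e • f).
have ea : alpha (e • f) = Nj e ⋆ alpha (e • f).
  apply/(nle_idemE HTi (aidem (idem_mul_idem HSi he hf)) (Nj_idem e)) => //.
case: (pi_spec he) => _ [h0 _].
rewrite (pi_le' he) (pi_le hf) -mT (mT (alpha e)) -amul ea.
by rewrite !mT h0 !(mul0x HT HTi).
Qed.

Lemma orth e f : idem mulS e -> idem mulS f -> e != f -> pi e ⋆ pi f = zeroT.
Proof.
move=> he hf hne.
case: (boolP (e • f == e)) => [/eqP h|h]; last exact: orth_aux.
rewrite (idem_comm HTi (pi_idem he) (pi_idem hf)); apply: orth_aux => //.
by rewrite (idem_comm HSi hf he) h.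
Qed.

Lemma below_conj y g : g \in below (r y) ->
  invS y • g • y \in below (d y) /\ y • (invS y • g • y) = g • y.
Proof.
rewrite inE => /and3P [/idSP hg /eqP eg hne].
split.
- rewrite inE; apply/and3P; split.
  + apply/idSP; exact: (conj_idem HSi).
  + apply/eqP; rewrite /gdom; exact: (conj_le HSi).
  + apply: contra hne => /eqP h.
    have := conj_back HSi hg eg.
    have e1 : y • invS y • g • y • invS y = y • (invS y • g • y) • invS y by rewrite !mS.
    move=> <-; rewrite e1 h /gdom mS (mul_inv_mul HSi); by rewrite /gran.
- rewrite !mS; exact: (conj_mul HSi eg).
Qed.

Lemma below_conj' y f : f \in below (d y) ->
  y • f • invS y \in below (r y) /\ y • f • invS y • y = y • f.
Proof.
move=> hf.
have := below_conj (y := invS y) (g := f).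
rewrite /gran /gdom (invK HSi) => /(_ hf) [h1 h2]; split => //.
move: hf; rewrite inE => /and3P [/idSP hf /eqP ef _].
rewrite -mS -mS -/(d y) (idem_comm HSi hf (idem_d HSi y)) -ef //.
Qed.
Lemma pc_Nj e : pairwise_compatible mulT invT (List.map alpha (enum (below e))).
Proof.
apply: (pc_idem HT HTi) => x /in_mapP [f [hf ->]]; apply: aidem.
move: hf; rewrite inE => /and3P [/idSP h _ _] //.
Qed.

Lemma Nj_conj y : Nj (r y) ⋆ alpha y = alpha y ⋆ Nj (d y).
Proof.
have h1 := join_mulr HT HTi (alpha y) (@pc_Nj (r y)) (Nj_spec (r y)).
have h2 := join_mull HT HTi (alpha y) (@pc_Nj (d y)) (Nj_spec (d y)).
rewrite List.map_map in h1; rewrite List.map_map in h2.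
apply: (join_uniq HT HTi h1); apply: (join_ext HT HTi _ h2) => x; split.
- case/in_mapP => f [hf ->].
  case: (below_conj' hf) => hg e; apply/in_mapP; exists (y • f • invS y); split => //.
  by rewrite -!amul e.
- case/in_mapP => g [hg ->].
  case: (below_conj hg) => hf e; apply/in_mapP; exists (invS y • g • y); split => //.
  by rewrite -!amul e.
Qed.

Lemma ar y : alpha (r y) = alpha y ⋆ invT (alpha y).
Proof. by rewrite /gran amul ainv. Qed.
Lemma ad y : alpha (d y) = invT (alpha y) ⋆ alpha y.
Proof. by rewrite /gdom amul ainv. Qed.

Lemma conj y : alpha y ⋆ pi (d y) = pi (r y) ⋆ alpha y.
Proof.
case: (pi_spec (idem_r HSi y)) => hp1 [hpn1 hj1].
case: (pi_spec (idem_d HSi y)) => hp2 [hpn2 hj2].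
rewrite ar in hj1; rewrite ad in hj2.
apply: (rc_conj HT HTi (Nj_idem _) (Nj_idem _) _ (Nj_conj y) hp1 hpn1 hj1 hp2 hpn2 hj2).
rewrite -ad; exact: (Nj_le (idem_d HSi y)).
Qed.

Lemma gx_r x : gx x = pi (r x) ⋆ alpha x.
Proof. exact: conj. Qed.

Lemma inv_gx x : invT (gx x) = alpha (invS x) ⋆ pi (r x).
Proof.
rewrite gx_r (inv_mul HTi) (idem_inv HTi (pi_idem (idem_r HSi x))) ainv //.
Qed.
Lemma inv_gx' x : invT (gx x) = pi (d x) ⋆ alpha (invS x).
Proof.
rewrite /gx (inv_mul HTi) (idem_inv HTi (pi_idem (idem_d HSi x))) ainv //.
Qed.

Lemma gx_mul x y : gx x ⋆ gx y = if composable mulS invS x y then gx (x • y) else zeroT.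
Proof.
rewrite (gx_r y) /gx /composable.
case: eqP => h.
- rewrite -h -(mT _ (pi (d x))) (mT (pi (d x))) (pi_idem (idem_d HSi x)) h.
  rewrite -conj mT -amul (d_mul HSi h) //.
- rewrite -(mT _ (pi (d x))) (mT (pi (d x))) (orth (idem_d HSi x) (idem_r HSi y)); last by apply/eqP.
  by rewrite (mul0x HT HTi) (mulx0 HT HTi).
Qed.

Lemma gx_compat (A : {set S}) x y : is_local_bisection mulS invS A -> x \in A -> y \in A ->
  compatible mulT invT (gx x) (gx y).
Proof.
move=> /(LBP HSi) [hd hr] hx hy.
case: (eqVneq x y) => [<-|hne].
- split; [exact: (idem_dom HTi) | exact: (idem_ran HTi)].
- have hr' : r x != r y by apply: contra hne => /eqP h; apply/eqP; exact: hr.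
  have hd' : d x != d y by apply: contra hne => /eqP h; apply/eqP; exact: hd.
  split.
  + rewrite inv_gx (gx_r y) mT -(mT (alpha (invS x))) (orth (idem_r HSi x) (idem_r HSi y) hr').
    rewrite (mulx0 HT HTi) (mul0x HT HTi); exact: (idem0 HT HTi).
  + rewrite inv_gx' /gx mT -(mT (alpha x)) (orth (idem_d HSi x) (idem_d HSi y) hd').
    rewrite (mulx0 HT HTi) (mul0x HT HTi); exact: (idem0 HT HTi).
Qed.

Lemma pc_gx (A : {set S}) : is_local_bisection mulS invS A ->
  pairwise_compatible mulT invT (List.map gx (enum A)).
Proof.
move=> hA a b /in_mapP [x [hx ->]] /in_mapP [y [hy ->]]; exact: (gx_compat hA hx hy).
Qed.

Lemma gam_spec (A : K) : JT (List.map gx (enum (val A))) (gam A).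
Proof.
rewrite /gam.
exact: (epsilon_spec (inhabits zeroT) (fun j => JT (List.map gx (enum (val A))) j)
   (join_exists HT HTi (pc_gx (valP A)))).
Qed.

Lemma downIP e f : (f \in downI e) = idS f && (f == e • f).
Proof. by rewrite inE. Qed.
Lemma belowP e f : (f \in below e) = [&& idS f, (f == e • f) & (f != e)].
Proof. by rewrite inE. Qed.

Lemma downI_self e : idem mulS e -> e \in downI e.
Proof. move=> he; rewrite downIP; apply/andP; split; [exact/idSP | by rewrite he]. Qed.

Lemma downI_trans e f g : f \in downI e -> g \in downI f -> g \in downI e.
Proof.
rewrite !downIP => /andP [hf /eqP ef] /andP [hg /eqP eg].
rewrite hg /=; apply/eqP; by rewrite {1}eg {1}ef -mS -eg.
Qed.

Lemma downI_antisym e f : f \in downI e -> e \in downI f -> e = f.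
Proof.
rewrite !downIP => /andP [/idSP hf /eqP ef] /andP [/idSP he /eqP fe].
by rewrite fe (idem_comm HSi hf he) -ef.
Qed.

Lemma downI_below e f : idem mulS e -> (f \in downI e) = (f == e) || (f \in below e).
Proof.
move=> he; rewrite belowP downIP.
case: (eqVneq f e) => [->|hne] /=; last by rewrite andbT.
have he2 : e • e = e := he; by rewrite /idS he2 eqxx.
Qed.

Lemma below_downI e f : f \in below e -> f \in downI e.
Proof. by rewrite belowP downIP => /and3P [-> -> _]. Qed.

Lemma pi_sum n : forall e, #|downI e| <= n -> idem mulS e ->
  JT (List.map pi (enum (downI e))) (alpha e).
Proof.
elim: n => [|n IH] e hn he.
- move: hn; rewrite leqn0 => /eqP /card0_eq h; have := h e; by rewrite (downI_self he).
- have IHb : forall f, List.In f (enum (below e)) -> JT (List.map pi (enum (downI f))) (alpha f).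
    move=> f /In_enum hf.
    have hfi : idem mulS f by move: hf; rewrite belowP => /and3P [/idSP h _ _].
    apply: IH => //.
    have hp : downI f \proper downI e.
      apply/properP; split.
      + apply/subsetP => g hg; apply: downI_trans (below_downI hf) hg.
      + exists e; first exact: downI_self.
        apply/negP => hef; move: (hf); rewrite belowP => /and3P [_ _ /eqP []].
        symmetry; apply: downI_antisym (below_downI hf) hef.
    exact: (leq_trans (proper_card hp) hn).
  have J1 := proj1 (join_flatten HT HTi (f := fun f => List.map pi (enum (downI f))) (Nj e) IHb) (Nj_spec e).
  have J2 : JT (List.map pi (enum (below e))) (Nj e).
    apply: (join_ext HT HTi _ J1) => x; split.
    + case/List.in_concat => ys [/List.in_map_iff [f [<- /In_enum hf]]] /in_mapP [g [hg ->]].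
      apply/in_mapP; exists g; split => //.
      rewrite belowP; have := downI_trans (below_downI hf) hg; rewrite downIP => /andP [-> ->] /=.
      apply/eqP => ege; subst g.
      move: (hf); rewrite belowP => /and3P [_ _ /eqP []].
      symmetry; apply: downI_antisym (below_downI hf) hg.
    + case/in_mapP => g [hg ->].
      apply/List.in_concat; exists (List.map pi (enum (downI g))); split.
      * apply/List.in_map_iff; exists g; split => //; exact/In_enum.
      * apply/in_mapP; exists g; split => //; apply: downI_self.
        by move: hg; rewrite belowP => /and3P [/idSP h _ _].
  case: (pi_spec he) => _ [_ hj].
  have J3 := proj1 (join_cons HT HTi (pi e) (alpha e) J2) hj.
  apply: (join_ext HT HTi _ J3) => x; split.
  + case=> [<-|/in_mapP [g [hg ->]]]; apply/in_mapP.
    * by exists e; split => //; apply: downI_self.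
    * by exists g; split => //; apply: below_downI.
  + case/in_mapP => f [hf ->]; rewrite (downI_below f he) in hf.
    case/orP: hf => [/eqP ->|hf]; first by left.
    right; apply/in_mapP; by exists f.
Qed.

Lemma d_af a f : f \in downI (d a) -> d (a • f) = f.
Proof.
rewrite downIP => /andP [/idSP hf /eqP ef].
rewrite /gdom (inv_mul HSi) (idem_inv HSi hf).
have e2 : invS a • a • f = f by rewrite -ef.
by arwS e2; arwS hf.
Qed.

Lemma gam_beta a : gam (beta mulS invS a) = alpha a.
Proof.
have h1 := gam_spec (beta mulS invS a); rewrite (valbeta HSi) in h1.
have hda := idem_d HSi a.
have h2 := pi_sum (leqnn _) hda.
have pc : pairwise_compatible mulT invT (List.map pi (enum (downI (d a)))).
  apply: (pc_idem HT HTi) => x /in_mapP [f [hf ->]]; apply: pi_idem.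
  by move: hf; rewrite downIP => /andP [/idSP h _].
have h3 := join_mull HT HTi (alpha a) pc h2.
rewrite -amul (mul_d HSi) List.map_map in h3.
apply: (join_uniq HT HTi h1); apply: (join_ext HT HTi _ h3) => x; split.
- case/in_mapP => f [hf ->]; apply/in_mapP; exists (a • f); split.
  + rewrite (downsetP HSi); change (invS (a • f) • (a • f)) with (d (a • f)).
    by rewrite d_af.
  + have hfi : idem mulS f by move: hf; rewrite downIP => /andP [/idSP h _].
    by rewrite /gx d_af // amul -mT -(pi_le hfi).
- case/in_mapP => y [hy ->]; apply/in_mapP; exists (d y).
  move: hy; rewrite (downsetP HSi) => /eqP ey.
  split.
  + rewrite downIP; apply/andP; split; first exact/idSP/(idem_d HSi).
    apply/eqP; exact: (nle_dom HSi ey).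
  + rewrite /gx; have -> : alpha y = alpha a ⋆ alpha (d y) by rewrite -amul -ey.
    by rewrite -mT -(pi_le (idem_d HSi y)).
Qed.

Lemma gam_zero : gam (Kzero mulS invS) = zeroT.
Proof.
have h := gam_spec (Kzero mulS invS); rewrite (valKzero HSi) enum_set0 in h.
exact: (join_uniq HT HTi h (join_nil HT HTi)).
Qed.

Lemma Kone_beta : Kone mulS invS = beta mulS invS oneS.
Proof.
apply: val_inj; rewrite (valKone HSi) (valbeta HSi); apply/setP => y.
rewrite (identitiesP HSi) (downsetP HSi).
have h1 : oneS • (invS y • y) = invS y • y by case: (proj2 HS (invS y • y)).
rewrite h1; apply/eqP/eqP.
- move=> h; rewrite (idem_inv HSi h) h //.
- move=> h; rewrite h; exact: (idem_dom HSi).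
Qed.

Lemma gam_one : gam (Kone mulS invS) = oneT.
Proof. by rewrite Kone_beta gam_beta aone. Qed.

Lemma gam_mul (A B : K) : gam (Kmul A B) = gam A ⋆ gam B.
Proof.
have hAB := gam_spec (Kmul A B); rewrite (valKmul HSi) in hAB.
have hA := gam_spec A; have hB := gam_spec B.
have h1 := join_mulr HT HTi (gam B) (pc_gx (valP A)) hA.
rewrite List.map_map in h1.
have hx : forall x, List.In x (enum (val A)) ->
    JT (List.map (fun y => gx x ⋆ gx y) (enum (val B))) (gx x ⋆ gam B).
  move=> x _; have := join_mull HT HTi (gx x) (pc_gx (valP B)) hB; by rewrite List.map_map.
have h2 := proj1 (join_flatten HT HTi (f := fun x => List.map (fun y => gx x ⋆ gx y) (enum (val B))) (gam A ⋆ gam B) hx) h1.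
symmetry; apply: (join_uniq HT HTi h2); apply: (join_ext0 HT HTi _ _ hAB).
- move=> z /in_mapP [w [/(gset_mulP HSi) [a [b [ha hb hc ->]]] ->]]; right.
  apply/List.in_concat; exists (List.map (fun y => gx a ⋆ gx y) (enum (val B))); split.
  + apply/List.in_map_iff; exists a; split => //; exact/In_enum.
  + apply/in_mapP; exists b; split => //; by rewrite gx_mul hc.
- move=> z /List.in_concat [ys [/List.in_map_iff [a [<- /In_enum ha]]]] /in_mapP [b [hb ->]].
  rewrite gx_mul; case: ifP => hc; last by left.
  right; apply/in_mapP; exists (a • b); split => //; apply/(gset_mulP HSi); by exists a, b.
Qed.

Lemma gam_join (A B C : K) : compatible (@Kmul S mulS invS) (@Kinv S mulS invS) A B ->
  is_join (@Kmul S mulS invS) (@Kinv S mulS invS) [:: A; B] C -> JT [:: gam A; gam B] (gam C).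
Proof.
move=> hc hj; have hU := compat_join_union HSi hc hj.
have hC := gam_spec C; rewrite hU in hC.
have hx : forall X, List.In X [:: A; B] -> JT (List.map gx (enum (val X))) (gam X).
  by move=> X _; exact: gam_spec.
apply: (proj2 (join_flatten HT HTi (gam C) hx)).
apply: (join_ext HT HTi _ hC) => x; split.
- case/in_mapP => z [hz ->]; rewrite /= List.in_app_iff List.in_app_iff.
  move: hz; rewrite inE => /orP [hz|hz]; [left | right; left]; apply/in_mapP; by exists z.
- rewrite /= List.in_app_iff List.in_app_iff => [[|[|[]]]] /in_mapP [z [hz ->]];
  apply/in_mapP; exists z; split => //; by rewrite inE hz ?orbT.
Qed.

Lemma foldr_memP (l : seq K) z :
  z \in foldr (fun X acc => val X :|: acc) set0 l <-> exists X, List.In X l /\ z \in val X.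
Proof.
elim: l => [|X l IH] /=; first by rewrite inE; split => // [[X [[]]]].
rewrite inE; split.
- case/orP => [h|/IH [Y [hY hz]]]; [by exists X; split; [left|] | by exists Y; split; [right|]].
- case=> Y [[<-|hY] hz]; first by rewrite hz.
  apply/orP; right; apply/IH; by exists Y.
Qed.

Lemma downset_downI f : idem mulS f -> downset mulS invS f = downI f.
Proof.
move=> hf; apply/setP => y; rewrite (downsetP HSi) downIP.
apply/eqP/andP.
- move=> ey; have hy : idem mulS y by exact: (idem_nle HSi hf ey).
  split; first exact/idSP.
  have hyy : y • y = y := hy. rewrite (idem_inv HSi hy) hyy in ey; by rewrite -ey.
- case=> /idSP hy /eqP ey; by rewrite (idem_inv HSi hy) hy.
Qed.

Lemma uniq_gam (g : K -> T) :
  bim_morphism (@Kmul S mulS invS) (Kone mulS invS) (Kzero mulS invS)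
    (@Kinv S mulS invS) mulT oneT zeroT invT g ->
  (forall a, g (beta mulS invS a) = alpha a) -> forall A, g A = gam A.
Proof.
move=> [[gmul gone] [gzero gjoin]] gb.
have U2 : forall (l : seq K) (U : K), val U = foldr (fun X acc => val X :|: acc) set0 l ->
    JT (List.map g l) (g U).
  elim => [|X l IH] U hU.
  - have -> : U = Kzero mulS invS by apply: val_inj.
    rewrite gzero; exact: (join_nil HT HTi).
    set V : {set S} := foldr (fun X acc => val X :|: acc) set0 l.
    have hLB : is_local_bisection mulS invS V.
      apply: (LB_sub HSi _ (valP U)); rewrite hU; exact: subsetUr.
    set U' : K := insubd (Kzero mulS invS) V.
    have hU' : val U' = V by rewrite (valK HSi hLB).
    have hXU : val U = val X :|: val U' by rewrite hU' hU.
    have hcomp : compatible (@Kmul S mulS invS) (@Kinv S mulS invS) X U'.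
      apply: (union_compat HSi); rewrite -hXU; exact: valP.
    have hj := union_join HSi hXU.
    have h := gjoin _ _ _ hcomp hj.
    have hl := IH U' hU'.
    exact: (proj1 (join_cons HT HTi (g X) (g U) hl) h).
have U3 : forall e, idem mulS e -> g (sing mulS invS e) = pi e.
  move=> e he.
  have hLBb : is_local_bisection mulS invS (below e).
    apply: (LB_sub HSi _ (LB_identities HSi)); apply/subsetP => f.
    by rewrite belowP (identitiesP HSi) => /and3P [].
  set B : K := insubd (Kzero mulS invS) (below e).
  have hB : val B = below e by rewrite (valK HSi hLBb).
  have gB : g B = Nj e.
    have hf : val B = foldr (fun X acc => val X :|: acc) set0 (List.map (beta mulS invS) (enum (below e))).
      apply/setP => z; apply/idP/idP.
      + rewrite hB => hz; apply/foldr_memP; exists (beta mulS invS z); split.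
        * apply/List.in_map_iff; exists z; split => //; exact/In_enum.
        * have hzi : idem mulS z by move: hz; rewrite belowP => /and3P [/idSP h _ _].
          rewrite (valbeta HSi) (downset_downI hzi); exact: downI_self.
      + case/foldr_memP => X [/List.in_map_iff [f [<- /In_enum hf]] hz].
        have hfi : idem mulS f by move: (hf); rewrite belowP => /and3P [/idSP h _ _].
        rewrite (valbeta HSi) (downset_downI hfi) in hz.
        rewrite hB belowP; have := downI_trans (below_downI hf) hz; rewrite downIP => /andP [-> ->] /=.
        apply/eqP => ze; subst z.
        move: (hf); rewrite belowP => /and3P [_ _ /eqP []].
        symmetry; apply: downI_antisym (below_downI hf) hz.
    have := U2 _ _ hf; rewrite List.map_map (List.map_ext _ _ gb) => h.
    exact: (join_uniq HT HTi h (Nj_spec e)).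
  have hbe : val (beta mulS invS e) = val (sing mulS invS e) :|: val B.
    rewrite (valbeta HSi) (valsing HSi) hB (downset_downI he); apply/setP => z.
    by rewrite (downI_below z he) !inE.
  have hc : compatible (@Kmul S mulS invS) (@Kinv S mulS invS) (sing mulS invS e) B.
    apply: (union_compat HSi); rewrite -hbe; exact: valP.
  have J := gjoin _ _ _ hc (union_join HSi hbe).
  rewrite gb gB in J.
  have hid : idem mulT (g (sing mulS invS e)).
    rewrite /idem -gmul; congr g.
    apply/(Kidem HSi); rewrite (valsing HSi); apply/subsetP => z; rewrite inE => /eqP ->.
    rewrite (identitiesP HSi); exact/eqP.
  have h0 : g (sing mulS invS e) ⋆ Nj e = zeroT.
    rewrite -gB -gmul -gzero; congr g; apply: val_inj.
    rewrite (valKmul HSi) (valsing HSi) hB (valKzero HSi); apply/setP => z.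
    rewrite inE; apply/negP => /(gset_mulP HSi) [a [b [ha hb /eqP hcomp _]]].
    move: ha; rewrite inE => /eqP ea; subst a.
    move: hb; rewrite belowP => /and3P [/idSP hbi _ /eqP []].
    by rewrite -(d_idem HSi he) hcomp (r_idem HSi hbi).
  case: (pi_spec he) => hp [hpn hjp].
  exact: (rc_uniq HT HTi (Nj_idem e) hid hp h0 hpn J hjp).
have U4 : forall x, g (sing mulS invS x) = gx x.
  move=> x.
  have -> : sing mulS invS x = Kmul (beta mulS invS x) (sing mulS invS (d x)).
    apply: val_inj; rewrite (valKmul HSi) (valbeta HSi) !(valsing HSi); apply/setP => z.
    rewrite inE; apply/eqP/(gset_mulP HSi).
    + move=> ->; exists x, (d x); split.
      * rewrite (downsetP HSi); apply/eqP; by rewrite mS (mul_inv_mul HSi).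
      * by rewrite inE.
      * by rewrite /composable (r_idem HSi (idem_d HSi x)).
      * by rewrite (mul_d HSi).
    + case=> [y [b [hy hb /eqP hcomp ->]]].
      move: hb; rewrite inE => /eqP eb; subst b.
      move: hcomp; rewrite (r_idem HSi (idem_d HSi x)) => hcomp.
      move: hy; rewrite (downsetP HSi) => /eqP ey.
      change (y = x • d y) in ey.
      by rewrite {1}ey hcomp !(mul_d HSi).
  by rewrite gmul gb (U3 _ (idem_d HSi x)).
move=> A.
have hf : val A = foldr (fun X acc => val X :|: acc) set0 (List.map (sing mulS invS) (enum (val A))).
  apply/setP => z; apply/idP/idP.
  - move=> hz; apply/foldr_memP; exists (sing mulS invS z); split.
    + apply/List.in_map_iff; exists z; split => //; exact/In_enum.
    + by rewrite (valsing HSi) inE.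
  - case/foldr_memP => X [/List.in_map_iff [x [<- /In_enum hx]] hz].
    by move: hz; rewrite (valsing HSi) inE => /eqP ->.
have := U2 _ _ hf; rewrite List.map_map (List.map_ext _ _ U4) => h.
exact: (join_uniq HT HTi h (gam_spec A)).
Qed.

Lemma main_result :
  exists gamma : KG mulS invS -> T,
    (bim_morphism (@Kmul S mulS invS) (Kone mulS invS) (Kzero mulS invS)
       (@Kinv S mulS invS) mulT oneT zeroT invT gamma /\
     forall a, gamma (beta mulS invS a) = alpha a) /\
    (forall gamma' : KG mulS invS -> T,
       bim_morphism (@Kmul S mulS invS) (Kone mulS invS) (Kzero mulS invS)
         (@Kinv S mulS invS) mulT oneT zeroT invT gamma' ->
       (forall a, gamma' (beta mulS invS a) = alpha a) ->
       forall A, gamma' A = gamma A).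
Proof.
exists gam; split; last exact: uniq_gam.
split; last exact: gam_beta.
split; first by split; [exact: gam_mul | exact: gam_one].
split; first exact: gam_zero.
move=> A B C hc hj; exact: gam_join.
Qed.

End Main.


Unset Implicit Arguments.

Theorem mainTheorem3
  (S : finType) (mulS : S -> S -> S) (oneS : S) (invS : S -> S)
  (HS : inverse_monoid mulS invS oneS)
  (T : Type) (mulT : T -> T -> T) (oneT zeroT : T) (invT : T -> T)
  (HT : boolean_inverse_monoid mulT invT oneT zeroT)
  (alpha : S -> T) (Halpha : monoid_hom mulS oneS mulT oneT alpha) :
  exists gamma : KG mulS invS -> T,
    (bim_morphism (@Kmul S mulS invS) (Kone mulS invS) (Kzero mulS invS)
       (@Kinv S mulS invS) mulT oneT zeroT invT gamma /\
     forall a, gamma (beta mulS invS a) = alpha a) /\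
    (forall gamma' : KG mulS invS -> T,
       bim_morphism (@Kmul S mulS invS) (Kone mulS invS) (Kzero mulS invS)
         (@Kinv S mulS invS) mulT oneT zeroT invT gamma' ->
       (forall a, gamma' (beta mulS invS a) = alpha a) ->
       forall A, gamma' A = gamma A).
Proof.
exact: (main_result HS HT Halpha).
Qed.
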